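(* For $[\mathfrak{p}]\in\mathfrak{F}_4''$ with $\mathfrak{p}=(p_1,p_2,p_3,p_4)$, put $\mathbb{X}_1=\mathbb{X}(p_1,p_2,p_3,p_4)$, $\mathbb{X}_2=\mathbb{X}(p_1,p_3,p_2,p_4)$ and $\mathbb{A}=\mathbb{A}(p_1,p_2,p_3)$. Then $\mathbb{A}\in(-\pi/2,\pi/2)$ and $$|\mathbb{X}_1+\mathbb{X}_2-1|^2=2\Re\left(\mathbb{X}_1\overline{\mathbb{X}_2}(1+e^{-2i\mathbb{A}})\right),$$ with $\mathbb{X}_1+\mathbb{X}_2-1\neq0$, $\Re(\mathbb{X}_1\overline{\mathbb{X}_2}e^{-i\mathbb{A}})>0$ and $\arg(\mathbb{X}_1/\mathbb{X}_2)\neq 2\mathbb{A}$. Moreover, the map $B_0:\mathfrak{F}_4''\to\mathfrak{V}_4$, $B_0([\mathfrak p])=(\mathbb{X}_1,\mathbb{X}_2,\mathbb{A})$, is well defined and bijective, where $\mathfrak{V}_4$ is the set of $(w_1,w_2,a)\in\mathbb{C}^2\times(-\pi/2,\pi/2)$ with $|w_1+w_2-1|^2=2\Re(w_1\overline{w_2}(1+e^{-2ia}))$, $w_1+w_2-1\neq0$, $\Re(w_1\overline{w_2}e^{-ia})>0$ and $\arg(w_1/w_2)\neq 2a$.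
   Context: Let $\mathbb{C}^{2,1}$ denote $\mathbb{C}^3$ with the Hermitian form $\langle \mathbf z,\mathbf w\rangle=z_1\overline{w_3}+z_2\overline{w_2}+z_3\overline{w_1}$. The boundary $\partial\mathbf{H}^2_\mathbb{C}$ is the set of complex lines of null vectors, identified with $(\mathbb{C}\times\mathbb{R})\cup\{\infty\}$, $(z,t)$ corresponding to the line of $(-|z|^2+it,\sqrt2 z,1)^T$ and $\infty$ to that of $(1,0,0)^T$; ${\rm PU}(2,1)$ acts on it. A $\mathbb{C}$-circle is the intersection of $\partial\mathbf{H}^2_\mathbb{C}$ with the projectivisation of a complex 2-dimensional subspace of signature $(1,1)$. Cartan's angular invariant: $\mathbb{A}(p_1,p_2,p_3)=\arg(-\langle\mathbf p_1,\mathbf p_2\rangle\langle\mathbf p_2,\mathbf p_3\rangle\langle\mathbf p_3,\mathbf p_1\rangle)\in[-\pi/2,\pi/2]$ for lifts $\mathbf p_i$. The Korányi–Reimann complex cross-ratio of four distinct points is $\mathbb{X}(p_1,p_2,p_3,p_4)=\frac{\langle\mathbf p_4,\mathbf p_2\rangle\langle\mathbf p_3,\mathbf p_1\rangle}{\langle\mathbf p_4,\mathbf p_1\rangle\langle\mathbf p_3,\mathbf p_2\rangle}$ (independent of lifts, ${\rm PU}(2,1)$-invariant). $\mathfrak{C}_4''$ is the set of ordered quadruples of pairwise distinct boundary points such that $p_1,p_2,p_3$ do not lie on a common $\mathbb{C}$-circle, $p_2,p_3,p_4$ do not lie on a common $\mathbb{C}$-circle, and $p_4$ is not in the orbit of $p_1$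 under the stabiliser of $p_2,p_3$ in ${\rm PU}(2,1)$; $\mathfrak{F}_4''=\mathfrak{C}_4''/{\rm PU}(2,1)$. *)

(* Defs.v *)
From Stdlib Require Import Reals.
Open Scope R_scope.

Record Cx := Cmk { Re : R; Im : R }.

Definition C0 : Cx := Cmk 0 0.
Definition C1 : Cx := Cmk 1 0.
Definition Cadd (z w : Cx) : Cx := Cmk (Re z + Re w) (Im z + Im w).
Definition Copp (z : Cx) : Cx := Cmk (- Re z) (- Im z).
Definition Csub (z w : Cx) : Cx := Cadd z (Copp w).
Definition Cmul (z w : Cx) : Cx :=
  Cmk (Re z * Re w - Im z * Im w) (Re z * Im w + Im z * Re w).
Definition Cconj (z : Cx) : Cx := Cmk (Re z) (- Im z).
Definition Cnorm2 (z : Cx) : R := Re z * Re z + Im z * Im z.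
Definition Cabs (z : Cx) : R := sqrt (Cnorm2 z).
Definition Cinv (z : Cx) : Cx := Cmk (Re z / Cnorm2 z) (- Im z / Cnorm2 z).
Definition Cdiv (z w : Cx) : Cx := Cmul z (Cinv w).
Definition Cexpi (a : R) : Cx := Cmk (cos a) (sin a).

(** Principal argument in (-PI, PI] (the usual atan2); arg 0 := 0. *)
Definition Carg (z : Cx) : R :=
  let x := Re z in let y := Im z in
  match Rlt_le_dec 0 x with
  | left _ => atan (y / x)
  | right _ =>
    match Rlt_le_dec x 0 with
    | left _ => match Rle_lt_dec 0 y with
                | left _ => atan (y / x) + PI
                | right _ => atan (y / x) - PI
                end
    | right _ =>
      match Rlt_le_dec 0 y with
      | left _ => PI / 2
      | right _ => match Rlt_le_dec y 0 with
                   | left _ => - (PI / 2)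
                   | right _ => 0
                   end
      end
    end
  end.

Record V3 := mkV { v1 : Cx; v2 : Cx; v3 : Cx }.
Definition V0 : V3 := mkV C0 C0 C0.
Definition Vscal (l : Cx) (v : V3) : V3 :=
  mkV (Cmul l (v1 v)) (Cmul l (v2 v)) (Cmul l (v3 v)).
Definition Vadd (v w : V3) : V3 :=
  mkV (Cadd (v1 v) (v1 w)) (Cadd (v2 v) (v2 w)) (Cadd (v3 v) (v3 w)).

Definition herm (z w : V3) : Cx :=
  Cadd (Cmul (v1 z) (Cconj (v3 w)))
    (Cadd (Cmul (v2 z) (Cconj (v2 w))) (Cmul (v3 z) (Cconj (v1 w)))).

(** 3x3 complex matrices (indices 0,1,2) acting on column vectors. *)
Definition M3 := nat -> nat -> Cx.
Definition mv (G : M3) (v : V3) : V3 :=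
  mkV (Cadd (Cmul (G 0%nat 0%nat) (v1 v)) (Cadd (Cmul (G 0%nat 1%nat) (v2 v)) (Cmul (G 0%nat 2%nat) (v3 v))))
      (Cadd (Cmul (G 1%nat 0%nat) (v1 v)) (Cadd (Cmul (G 1%nat 1%nat) (v2 v)) (Cmul (G 1%nat 2%nat) (v3 v))))
      (Cadd (Cmul (G 2%nat 0%nat) (v1 v)) (Cadd (Cmul (G 2%nat 1%nat) (v2 v)) (Cmul (G 2%nat 2%nat) (v3 v)))).

(** U(2,1): matrices preserving the Hermitian form (automatically invertible,
    the form being non-degenerate).  PU(2,1) = U(2,1)/scalars acts on
    complex lines through U(2,1). *)
Definition isU21 (G : M3) : Prop :=
  forall z w : V3, herm (mv G z) (mv G w) = herm z w.

(** * Boundary points: nonzero null vectors, up to nonzero complex scalars. *)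
Definition isNull (v : V3) : Prop := v <> V0 /\ herm v v = C0.
Definition samePt (p q : V3) : Prop := exists l : Cx, l <> C0 /\ q = Vscal l p.

Definition inSpan2 (u w v : V3) : Prop :=
  exists a b : Cx, v = Vadd (Vscal a u) (Vscal b w).

(** Lines of p, q, r lie on a common Cx-circle: there is a complex
    2-dimensional subspace span(u,w) of signature (1,1) (containing both a
    positive and a negative vector) containing p, q, r. *)
Definition onCommonCcircle (p q r : V3) : Prop :=
  exists u w : V3,
    (forall a b : Cx, Vadd (Vscal a u) (Vscal b w) = V0 -> a = C0 /\ b = C0) /\
    (exists x, inSpan2 u w x /\ Re (herm x x) > 0) /\
    (exists x, inSpan2 u w x /\ Re (herm x x) < 0) /\
    inSpan2 u w p /\ inSpan2 u w q /\ inSpan2 u w r.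

Record Quad := mkQ { qp1 : V3; qp2 : V3; qp3 : V3; qp4 : V3 }.

Definition inC4'' (P : Quad) : Prop :=
  let p1 := qp1 P in let p2 := qp2 P in let p3 := qp3 P in let p4 := qp4 P in
  isNull p1 /\ isNull p2 /\ isNull p3 /\ isNull p4 /\
  ~ samePt p1 p2 /\ ~ samePt p1 p3 /\ ~ samePt p1 p4 /\
  ~ samePt p2 p3 /\ ~ samePt p2 p4 /\ ~ samePt p3 p4 /\
  ~ onCommonCcircle p1 p2 p3 /\
  ~ onCommonCcircle p2 p3 p4 /\
  ~ (exists G : M3, isU21 G /\ samePt p2 (mv G p2) /\ samePt p3 (mv G p3)
                    /\ samePt p4 (mv G p1)).

(** Two quadruples represent the same point of F_4'' = C_4''/PU(2,1). *)
Definition quadEquiv (P Q : Quad) : Prop :=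
  exists G : M3, isU21 G /\
    samePt (mv G (qp1 P)) (qp1 Q) /\ samePt (mv G (qp2 P)) (qp2 Q) /\
    samePt (mv G (qp3 P)) (qp3 Q) /\ samePt (mv G (qp4 P)) (qp4 Q).

Definition crossX (p1 p2 p3 p4 : V3) : Cx :=
  Cdiv (Cmul (herm p4 p2) (herm p3 p1)) (Cmul (herm p4 p1) (herm p3 p2)).
Definition cartanA (p1 p2 p3 : V3) : R :=
  Carg (Copp (Cmul (Cmul (herm p1 p2) (herm p2 p3)) (herm p3 p1))).

Definition B0 (P : Quad) : Cx * Cx * R :=
  (crossX (qp1 P) (qp2 P) (qp3 P) (qp4 P),
   crossX (qp1 P) (qp3 P) (qp2 P) (qp4 P),
   cartanA (qp1 P) (qp2 P) (qp3 P)).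

Definition inV4 (w1 w2 : Cx) (a : R) : Prop :=
  - (PI / 2) < a < PI / 2 /\
  Cnorm2 (Csub (Cadd w1 w2) C1)
    = 2 * Re (Cmul (Cmul w1 (Cconj w2)) (Cadd C1 (Cexpi (- (2 * a))))) /\
  Csub (Cadd w1 w2) C1 <> C0 /\
  Re (Cmul (Cmul w1 (Cconj w2)) (Cexpi (- a))) > 0 /\
  Carg (Cdiv w1 w2) <> 2 * a.

(* Main.v *)
Require Import Defs.
From Stdlib Require Import Reals Lra Ring Field.
Open Scope R_scope.

Lemma Cx_ext : forall z w : Cx, Re z = Re w -> Im z = Im w -> z = w.
Proof. intros [a b] [c d]; simpl; intros -> ->; reflexivity. Qed.

Ltac cxe := apply Cx_ext; simpl; try ring.

Lemma Cx_ring : ring_theory Defs.C0 Defs.C1 Cadd Cmul Csub Copp (@eq Cx).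
Proof.
  constructor; intros; unfold Csub; cxe.
Qed.
Add Ring Cxring : Cx_ring.

Lemma C1_neq_C0 : Defs.C1 <> Defs.C0.
Proof. intro H. injection H. lra. Qed.

Lemma Cnorm2_pos : forall z, z <> Defs.C0 -> 0 < Cnorm2 z.
Proof.
  intros [a b] H; unfold Cnorm2; simpl.
  destruct (Req_dec a 0) as [->|Ha]; [destruct (Req_dec b 0) as [->|Hb]|].
  - exfalso; apply H; reflexivity.
  - nra.
  - nra.
Qed.

Lemma Cx_field : field_theory Defs.C0 Defs.C1 Cadd Cmul Csub Copp Cdiv Cinv (@eq Cx).
Proof.
  constructor.
  - exact Cx_ring.
  - exact C1_neq_C0.
  - reflexivity.
  - intros [a b] H. pose proof (Cnorm2_pos _ H) as Hp. unfold Cinv, Cnorm2 in *; simpl in *.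
    apply Cx_ext; simpl; field; lra.

Qed.
Add Field Cxfield : Cx_field.

Lemma test2 (a b : Cx) : Cmul a b = Cmul b a.
Proof. ring. Qed.
Lemma test (a b : Cx) : b <> Defs.C0 -> Cmul (Cdiv a b) b = a.
Proof. intros. field. auto. Qed.

Lemma cj_add x y : Cconj (Cadd x y) = Cadd (Cconj x) (Cconj y). Proof. cxe. Qed.
Lemma cj_mul x y : Cconj (Cmul x y) = Cmul (Cconj x) (Cconj y). Proof. cxe. Qed.
Lemma cj_opp x : Cconj (Copp x) = Copp (Cconj x). Proof. cxe. Qed.
Lemma cj_sub x y : Cconj (Csub x y) = Csub (Cconj x) (Cconj y). Proof. cxe. Qed.
Lemma cj_cj x : Cconj (Cconj x) = x. Proof. cxe. Qed.
Lemma cj_0 : Cconj Defs.C0 = Defs.C0. Proof. cxe. Qed.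
Lemma cj_1 : Cconj Defs.C1 = Defs.C1. Proof. cxe. Qed.
Hint Rewrite cj_add cj_mul cj_opp cj_sub cj_cj cj_0 cj_1 : cj.

Definition det3 (a b c : V3) : Cx :=
  let '(mkV a1 a2 a3) := a in let '(mkV b1 b2 b3) := b in let '(mkV c1 c2 c3) := c in
  Cadd (Cmul a1 (Csub (Cmul b2 c3) (Cmul b3 c2)))
   (Cadd (Copp (Cmul b1 (Csub (Cmul a2 c3) (Cmul a3 c2))))
         (Cmul c1 (Csub (Cmul a2 b3) (Cmul a3 b2)))).

Lemma gram_det (a b c : V3) :
  let g11 := herm a a in let g22 := herm b b in let g33 := herm c c in
  let g12 := herm a b in let g23 := herm b c in let g31 := herm c a in
  let g21 := herm b a in let g32 := herm c b in let g13 := herm a c in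
  Csub (Cadd (Cadd (Cmul (Cmul g11 g22) g33) (Cmul (Cmul g12 g23) g31)) (Cmul (Cmul g13 g21) g32))
       (Cadd (Cadd (Cmul (Cmul g11 g23) g32) (Cmul (Cmul g22 g13) g31)) (Cmul (Cmul g33 g12) g21))
  = Copp (Cmul (det3 a b c) (Cconj (det3 a b c))).
Proof.
  destruct a as [a1 a2 a3], b as [b1 b2 b3], c as [c1 c2 c3].
  unfold herm, det3; simpl. autorewrite with cj. ring.
Qed.

Definition RtoC (r : R) : Cx := Cmk r 0.
Lemma cj_inv x : Cconj (Cinv x) = Cinv (Cconj x).
Proof. destruct x as [a b]; unfold Cinv, Cnorm2; apply Cx_ext; simpl; [f_equal; ring | unfold Rdiv; replace (b*b) with ((-b)*(-b)) by ring; ring]. Qed.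
Lemma cj_div x y : Cconj (Cdiv x y) = Cdiv (Cconj x) (Cconj y).
Proof. unfold Cdiv. rewrite cj_mul, cj_inv. reflexivity. Qed.
Lemma cj_R r : Cconj (RtoC r) = RtoC r. Proof. unfold RtoC; cxe. Qed.
Hint Rewrite cj_inv cj_div cj_R : cj.

Lemma mul_conj z : Cmul z (Cconj z) = RtoC (Cnorm2 z).
Proof. unfold RtoC, Cnorm2; cxe. Qed.
Lemma Re_RtoC_mul r z : Re (Cmul (RtoC r) z) = r * Re z.
Proof. unfold RtoC; simpl; ring. Qed.
Lemma RtoC_mul r s : RtoC (r * s) = Cmul (RtoC r) (RtoC s).
Proof. unfold RtoC; cxe. Qed.
Lemma RtoC_add r s : RtoC (r + s) = Cadd (RtoC r) (RtoC s).
Proof. unfold RtoC; cxe. Qed.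
Lemma RtoC_inj r s : RtoC r = RtoC s -> r = s.
Proof. unfold RtoC; intro H; injection H; auto. Qed.
Lemma RtoC_neq0 r : r <> 0 -> RtoC r <> Defs.C0.
Proof. unfold RtoC; intros H H'; injection H'; auto. Qed.
Lemma Cnorm2_eq0 z : Cnorm2 z = 0 -> z = Defs.C0.
Proof. destruct z as [a b]; unfold Cnorm2; simpl; intro; apply Cx_ext; simpl; nra. Qed.
Lemma cj_neq0 z : z <> Defs.C0 -> Cconj z <> Defs.C0.
Proof. intros H H'; apply H. rewrite <- (cj_cj z), H'. apply cj_0. Qed.
Lemma Cmul_neq0 a b : a <> Defs.C0 -> b <> Defs.C0 -> Cmul a b <> Defs.C0.
Proof. intros Ha Hb H. apply Ha. replace a with (Cdiv (Cmul a b) b) by (field; auto).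
  rewrite H. field. auto. Qed.
Lemma Cmul_eq0 a b : Cmul a b = Defs.C0 -> a = Defs.C0 \/ b = Defs.C0.
Proof. intros H. destruct (Req_dec (Cnorm2 a) 0) as [Ha|Ha]. left; apply Cnorm2_eq0; auto.
  right. assert (a <> Defs.C0) by (intro E; subst; apply Ha; unfold Cnorm2; simpl; ring).
  replace b with (Cdiv (Cmul a b) a) by (field; auto). rewrite H; field; auto. Qed.
Lemma Cinv_neq0 a : a <> Defs.C0 -> Cinv a <> Defs.C0.
Proof. intros Ha H. apply C1_neq_C0. replace Defs.C1 with (Cmul a (Cinv a)) by (field; auto).
  rewrite H; ring. Qed.
Lemma Cnorm2_mul a b : Cnorm2 (Cmul a b) = Cnorm2 a * Cnorm2 b.
Proof. destruct a, b; unfold Cnorm2; simpl; ring. Qed.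
Lemma Cnorm2_nonneg a : 0 <= Cnorm2 a.
Proof. destruct a; unfold Cnorm2; simpl; nra. Qed.

Lemma herm_sym x y : herm y x = Cconj (herm x y).
Proof. destruct x, y; unfold herm; simpl; autorewrite with cj; ring. Qed.

Definition comb3 (c1 c2 c3 : Cx) (x1 x2 x3 : V3) : V3 :=
  Vadd (Vadd (Vscal c1 x1) (Vscal c2 x2)) (Vscal c3 x3).

Lemma herm_comb3 c1 c2 c3 x1 x2 x3 d1 d2 d3 y1 y2 y3 :
  herm (comb3 c1 c2 c3 x1 x2 x3) (comb3 d1 d2 d3 y1 y2 y3) =
  Cadd (Cadd
   (Cadd (Cadd (Cmul (Cmul c1 (Cconj d1)) (herm x1 y1)) (Cmul (Cmul c1 (Cconj d2)) (herm x1 y2)))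
         (Cmul (Cmul c1 (Cconj d3)) (herm x1 y3)))
   (Cadd (Cadd (Cmul (Cmul c2 (Cconj d1)) (herm x2 y1)) (Cmul (Cmul c2 (Cconj d2)) (herm x2 y2)))
         (Cmul (Cmul c2 (Cconj d3)) (herm x2 y3))))
   (Cadd (Cadd (Cmul (Cmul c3 (Cconj d1)) (herm x3 y1)) (Cmul (Cmul c3 (Cconj d2)) (herm x3 y2)))
         (Cmul (Cmul c3 (Cconj d3)) (herm x3 y3))).
Proof.
  destruct x1, x2, x3, y1, y2, y3; unfold comb3, herm, Vadd, Vscal; simpl.
  autorewrite with cj. ring.
Qed.

Lemma herm_scal x y l m : herm (Vscal l x) (Vscal m y) = Cmul (Cmul l (Cconj m)) (herm x y).
Proof. destruct x, y; unfold herm, Vscal; simpl; autorewrite with cj; ring. Qed.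
Lemma herm_scal_l x y l : herm (Vscal l x) y = Cmul l (herm x y).
Proof. destruct x, y; unfold herm, Vscal; simpl; autorewrite with cj; ring. Qed.
Lemma herm_scal_r x y l : herm x (Vscal l y) = Cmul (Cconj l) (herm x y).
Proof. destruct x, y; unfold herm, Vscal; simpl; autorewrite with cj; ring. Qed.
Lemma herm_add_l x y z : herm (Vadd x y) z = Cadd (herm x z) (herm y z).
Proof. destruct x, y, z; unfold herm, Vadd; simpl; autorewrite with cj; ring. Qed.
Lemma herm_add_r x y z : herm z (Vadd x y) = Cadd (herm z x) (herm z y).
Proof. destruct x, y, z; unfold herm, Vadd; simpl; autorewrite with cj; ring. Qed.
Lemma Vscal_Vscal a b x : Vscal a (Vscal b x) = Vscal (Cmul a b) x.
Proof. destruct x; unfold Vscal; simpl; f_equal; ring. Qed.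
Lemma Vscal_1 x : Vscal Defs.C1 x = x.
Proof. destruct x; unfold Vscal; simpl; f_equal; ring. Qed.

Lemma null_herm_0 p : isNull p -> herm p p = Defs.C0.
Proof. intros [_ H]; exact H. Qed.

Lemma samePt_sym p q : samePt p q -> samePt q p.
Proof. intros [l [Hl ->]]. exists (Cinv l); split. apply Cinv_neq0; auto.
  rewrite Vscal_Vscal. replace (Cmul (Cinv l) l) with Defs.C1 by (field; auto). now rewrite Vscal_1. Qed.

Lemma samePt_herm p q : isNull p -> samePt p q -> herm p q = Defs.C0.
Proof. intros Hp [l [_ ->]]. rewrite herm_scal_r, null_herm_0 by auto. ring. Qed.

Lemma Vscal_eq0 l x : Vscal l x = V0 -> x <> V0 -> l = Defs.C0.
Proof. destruct x as [x1 x2 x3]; unfold Vscal, V0; intros H Hx.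
  pose proof (f_equal v1 H) as H1; pose proof (f_equal v2 H) as H2; pose proof (f_equal v3 H) as H3; simpl in H1, H2, H3.
  destruct (Cmul_eq0 _ _ H1); auto. destruct (Cmul_eq0 _ _ H2); auto. destruct (Cmul_eq0 _ _ H3); auto.
  subst. exfalso; apply Hx; reflexivity. Qed.

Lemma norm_eq (a b d e : Cx) :
  Cadd (Cadd a (Cmul b (Cconj b))) (Cconj a) = Defs.C0 ->
  Cadd (Cadd d (Cmul e (Cconj e))) (Cconj d) = Defs.C0 ->
  Cadd (Cadd a (Cmul b (Cconj e))) (Cconj d) = Defs.C0 -> a = d /\ b = e.
Proof.
  destruct a as [x1 y1], b as [u1 v1], d as [x2 y2], e as [u2 v2].
  intros H1 H2 H3.
  pose proof (f_equal Re H1) as R1; pose proof (f_equal Re H2) as R2;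
  pose proof (f_equal Re H3) as R3; pose proof (f_equal Im H3) as I3.
  simpl in *.
  assert (E : (u1-u2)*(u1-u2)+(v1-v2)*(v1-v2) = 0) by nra.
  assert (Hu' : (u1-u2)*(u1-u2) = 0) by (pose proof (Rle_0_sqr (u1-u2)); pose proof (Rle_0_sqr (v1-v2)); unfold Rsqr in *; lra).
  assert (Hv' : (v1-v2)*(v1-v2) = 0) by (pose proof (Rle_0_sqr (u1-u2)); pose proof (Rle_0_sqr (v1-v2)); unfold Rsqr in *; lra).
  assert (Hu : u1 = u2) by (destruct (Rmult_integral _ _ Hu'); lra).
  assert (Hv : v1 = v2) by (destruct (Rmult_integral _ _ Hv'); lra). subst.
  split; apply Cx_ext; simpl; nra.
Qed.

Lemma null_orth p q : isNull p -> isNull q -> herm p q = Defs.C0 -> samePt p q.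
Proof.
  intros [Hp0 Hp] [Hq0 Hq] Hpq.
  destruct p as [a b c], q as [d e f]. unfold herm in Hp, Hq, Hpq; simpl in *.
  destruct (Req_dec (Cnorm2 c) 0) as [Hc|Hc].
  - apply Cnorm2_eq0 in Hc; subst c.
    assert (Hb : Cnorm2 b = 0).
    { pose proof (f_equal Re Hp) as R. destruct a, b; unfold Cnorm2; simpl in *. lra. }
    apply Cnorm2_eq0 in Hb; subst b.
    assert (Ha : a <> Defs.C0) by (intro; subst; apply Hp0; reflexivity).
    assert (Hf : f = Defs.C0).
    { assert (Cmul a (Cconj f) = Defs.C0) by (rewrite <- Hpq; autorewrite with cj; ring).
      destruct (Cmul_eq0 _ _ H) as [H'|H']; [contradiction|].
      rewrite <- (cj_cj f), H'; apply cj_0. }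
    subst f.
    assert (He : Cnorm2 e = 0).
    { pose proof (f_equal Re Hq) as R. destruct d, e; unfold Cnorm2; simpl in *. lra. }
    apply Cnorm2_eq0 in He; subst e.
    exists (Cdiv d a). split.
    + intro H. apply Hq0. assert (d = Defs.C0).
      { replace d with (Cmul (Cdiv d a) a) by (field; auto). rewrite H; ring. }
      subst; reflexivity.
    + unfold Vscal; simpl; f_equal; field; auto.
  - assert (Hc' : c <> Defs.C0) by (intro; subst; apply Hc; unfold Cnorm2; simpl; ring).
    destruct (Req_dec (Cnorm2 f) 0) as [Hf|Hf].
    + exfalso. apply Cnorm2_eq0 in Hf; subst f.
      assert (He : Cnorm2 e = 0).
      { pose proof (f_equal Re Hq) as R. destruct d, e; unfold Cnorm2; simpl in *. lra. }
      apply Cnorm2_eq0 in He; subst e.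
      assert (Cmul c (Cconj d) = Defs.C0) by (rewrite <- Hpq; autorewrite with cj; ring).
      destruct (Cmul_eq0 _ _ H) as [H'|H']; [contradiction|].
      apply Hq0. rewrite <- (cj_cj d), H', cj_0; reflexivity.
    + assert (Hf' : f <> Defs.C0) by (intro; subst; apply Hf; unfold Cnorm2; simpl; ring).
      pose proof (cj_neq0 _ Hc') as Hcc. pose proof (cj_neq0 _ Hf') as Hfc.
      destruct (norm_eq (Cdiv a c) (Cdiv b c) (Cdiv d f) (Cdiv e f)) as [E1 E2].
      * autorewrite with cj.
        transitivity (Cdiv (Cadd (Cmul a (Cconj c)) (Cadd (Cmul b (Cconj b)) (Cmul c (Cconj a))))
                           (Cmul c (Cconj c))).
        field; auto. rewrite Hp. field; auto.
      * autorewrite with cj.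
        transitivity (Cdiv (Cadd (Cmul d (Cconj f)) (Cadd (Cmul e (Cconj e)) (Cmul f (Cconj d))))
                           (Cmul f (Cconj f))).
        field; auto. rewrite Hq. field; auto.
      * autorewrite with cj.
        transitivity (Cdiv (Cadd (Cmul a (Cconj f)) (Cadd (Cmul b (Cconj e)) (Cmul c (Cconj d))))
                           (Cmul c (Cconj f))).
        field; auto. rewrite Hpq. field; auto.
      * exists (Cdiv f c). split.
        -- intro H. apply Hf'. replace f with (Cmul (Cdiv f c) c) by (field; auto). rewrite H; ring.
        -- unfold Vscal; simpl. f_equal.
           ++ replace d with (Cmul f (Cdiv d f)) by (field; auto). rewrite <- E1. field; auto.
           ++ replace e with (Cmul f (Cdiv e f)) by (field; auto). rewrite <- E2. field; auto.
           ++ field; auto.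
Qed.

Lemma herm_neq0 p q : isNull p -> isNull q -> ~ samePt p q -> herm p q <> Defs.C0.
Proof. intros Hp Hq Hs H. apply Hs, null_orth; auto. Qed.

Lemma circle_det0 p q r : onCommonCcircle p q r -> det3 p q r = Defs.C0.
Proof.
  intros [u [w [_ [_ [_ [[a1 [b1 ->]] [[a2 [b2 ->]] [a3 [b3 ->]]]]]]]]].
  destruct u, w; unfold det3, Vadd, Vscal; simpl. ring.
Qed.

Lemma Cx_neq0_dec z : z = Defs.C0 \/ z <> Defs.C0.
Proof. destruct (Req_dec (Cnorm2 z) 0) as [H|H]. left; apply Cnorm2_eq0; auto.
  right; intro E; subst; apply H; unfold Cnorm2; simpl; ring. Qed.


Lemma minor_l x x' y y' : Csub (Cmul x y') (Cmul x' y) = Defs.C0 -> x <> Defs.C0 ->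
  y' = Cmul (Cdiv y x) x'.
Proof. intros H Hx. replace y' with (Cdiv (Cadd (Csub (Cmul x y') (Cmul x' y)) (Cmul x' y)) x)
  by (field; auto). rewrite H. field; auto. Qed.
Lemma minor_r x x' y y' : Csub (Cmul x' y) (Cmul x y') = Defs.C0 -> x <> Defs.C0 ->
  y' = Cmul (Cdiv y x) x'.
Proof. intros H Hx. apply minor_l; auto. replace (Csub (Cmul x y') (Cmul x' y)) with
  (Copp (Csub (Cmul x' y) (Cmul x y'))) by ring. rewrite H; ring. Qed.

Lemma samePt_of_minors a1 a2 a3 b1 b2 b3 :
  mkV a1 a2 a3 <> V0 -> mkV b1 b2 b3 <> V0 ->
  Csub (Cmul a2 b3) (Cmul a3 b2) = Defs.C0 ->
  Csub (Cmul a3 b1) (Cmul a1 b3) = Defs.C0 ->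
  Csub (Cmul a1 b2) (Cmul a2 b1) = Defs.C0 -> samePt (mkV a1 a2 a3) (mkV b1 b2 b3).
Proof.
  intros Ha Hb M1 M2 M3.
  assert (K : forall l, mkV b1 b2 b3 = Vscal l (mkV a1 a2 a3) -> samePt (mkV a1 a2 a3) (mkV b1 b2 b3)).
  { intros l E. exists l; split; auto. intro L; subst l. apply Hb. rewrite E.
    unfold Vscal, V0; simpl; f_equal; ring. }
  destruct (Cx_neq0_dec a1) as [A1|A1]; [destruct (Cx_neq0_dec a2) as [A2|A2];
      [destruct (Cx_neq0_dec a3) as [A3|A3]|]|].
  - subst; exfalso; apply Ha; reflexivity.
  - apply (K (Cdiv b3 a3)). unfold Vscal; simpl; f_equal.
    + apply minor_l; auto.
    + apply minor_r; auto.
    + field; auto.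
  - apply (K (Cdiv b2 a2)). unfold Vscal; simpl; f_equal.
    + apply minor_r; auto.
    + field; auto.
    + apply minor_l; auto.
  - apply (K (Cdiv b1 a1)). unfold Vscal; simpl; f_equal.
    + field; auto.
    + apply minor_l; auto.
    + apply minor_r; auto.
Qed.

Lemma span_of_det0 a b c : a <> V0 -> b <> V0 -> ~ samePt a b -> det3 a b c = Defs.C0 ->
  exists al be, c = Vadd (Vscal al a) (Vscal be b).
Proof.
  intros Ha Hb Hab Hd.
  destruct a as [a1 a2 a3], b as [b1 b2 b3], c as [c1 c2 c3]. unfold det3 in Hd.
  destruct (Cx_neq0_dec (Csub (Cmul a1 b2) (Cmul a2 b1))) as [M3|M3];
  [destruct (Cx_neq0_dec (Csub (Cmul a2 b3) (Cmul a3 b2))) as [M1|M1];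
   [destruct (Cx_neq0_dec (Csub (Cmul a3 b1) (Cmul a1 b3))) as [M2|M2]|]|].
  - exfalso. apply Hab. apply samePt_of_minors; auto.
  - exists (Cdiv (Csub (Cmul c3 b1) (Cmul c1 b3)) (Csub (Cmul a3 b1) (Cmul a1 b3))),
           (Cdiv (Csub (Cmul a3 c1) (Cmul a1 c3)) (Csub (Cmul a3 b1) (Cmul a1 b3))).
    unfold Vadd, Vscal; simpl; f_equal; [field; auto| |field; auto].
    match type of Hd with ?D = _ =>
      assert (E : c2 = Csub c2 (Cdiv D (Csub (Cmul a3 b1) (Cmul a1 b3)))) by (rewrite Hd; field; auto) end.
    rewrite E at 1. field; auto.
  - exists (Cdiv (Csub (Cmul c2 b3) (Cmul c3 b2)) (Csub (Cmul a2 b3) (Cmul a3 b2))),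
           (Cdiv (Csub (Cmul a2 c3) (Cmul a3 c2)) (Csub (Cmul a2 b3) (Cmul a3 b2))).
    unfold Vadd, Vscal; simpl; f_equal; [|field; auto|field; auto].
    match type of Hd with ?D = _ =>
      assert (E : c1 = Csub c1 (Cdiv D (Csub (Cmul a2 b3) (Cmul a3 b2)))) by (rewrite Hd; field; auto) end.
    rewrite E at 1. field; auto.
  - exists (Cdiv (Csub (Cmul c1 b2) (Cmul c2 b1)) (Csub (Cmul a1 b2) (Cmul a2 b1))),
           (Cdiv (Csub (Cmul a1 c2) (Cmul a2 c1)) (Csub (Cmul a1 b2) (Cmul a2 b1))).
    unfold Vadd, Vscal; simpl; f_equal; [field; auto|field; auto|].
    match type of Hd with ?D = _ =>
      assert (E : c3 = Csub c3 (Cdiv D (Csub (Cmul a1 b2) (Cmul a2 b1)))) by (rewrite Hd; field; auto) end.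
    rewrite E at 1. field; auto.
Qed.

Lemma herm_pair p q a b : isNull p -> isNull q ->
  herm (Vadd (Vscal a p) (Vscal b q)) (Vadd (Vscal a p) (Vscal b q)) =
  Cadd (Cmul (Cmul a (Cconj b)) (herm p q)) (Cmul (Cmul b (Cconj a)) (Cconj (herm p q))).
Proof.
  intros Hp Hq. rewrite !herm_add_l, !herm_add_r, !herm_scal, !null_herm_0 by auto.
  rewrite (herm_sym p q). ring.
Qed.

Lemma det0_circle p q r : isNull p -> isNull q -> isNull r -> ~ samePt p q ->
  det3 p q r = Defs.C0 -> onCommonCcircle p q r.
Proof.
  intros Hp Hq Hr Hpq Hd.
  pose proof (herm_neq0 _ _ Hp Hq Hpq) as Hg.
  pose proof (Cnorm2_pos _ Hg) as Hgp.
  exists p, q. split; [|split; [|split; [|split; [|split]]]].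
  - intros a b H. destruct (Cx_neq0_dec b) as [Hb|Hb].
    + subst b. split; auto. apply (Vscal_eq0 a p); [|apply Hp].
      rewrite <- H. destruct p, q; unfold Vadd, Vscal; simpl; f_equal; ring.
    + exfalso. destruct (Cx_neq0_dec a) as [Ha|Ha].
      * subst a. apply (proj1 Hq). replace q with (Vscal (Cinv b) (Vscal b q)).
        2:{ rewrite Vscal_Vscal. replace (Cmul (Cinv b) b) with Defs.C1 by (field; auto). apply Vscal_1. }
        replace (Vscal b q) with V0. destruct q; unfold Vscal, V0; simpl; f_equal; ring.
        rewrite <- H. destruct p, q; unfold Vadd, Vscal; simpl; f_equal; ring.
      * apply Hpq. exists (Copp (Cdiv a b)). split.
        { intro E. apply Ha. replace a with (Copp (Cmul (Copp (Cdiv a b)) b)) by (field; auto). rewrite E; ring. }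
        destruct p as [x1 x2 x3], q as [y1 y2 y3]. unfold Vadd, Vscal, V0 in H.
        pose proof (f_equal v1 H) as H1; pose proof (f_equal v2 H) as H2; pose proof (f_equal v3 H) as H3; simpl in H1, H2, H3.
        unfold Vscal; simpl; f_equal.
        -- replace y1 with (Cdiv (Csub (Cadd (Cmul a x1) (Cmul b y1)) (Cmul a x1)) b) by (field; auto). rewrite H1. field; auto.
        -- replace y2 with (Cdiv (Csub (Cadd (Cmul a x2) (Cmul b y2)) (Cmul a x2)) b) by (field; auto). rewrite H2. field; auto.
        -- replace y3 with (Cdiv (Csub (Cadd (Cmul a x3) (Cmul b y3)) (Cmul a x3)) b) by (field; auto). rewrite H3. field; auto.
  - exists (Vadd (Vscal Defs.C1 p) (Vscal (herm p q) q)). split. exists Defs.C1, (herm p q); reflexivity.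
    rewrite herm_pair by auto. destruct (herm p q) as [x y]; unfold Cnorm2 in Hgp; simpl in *. lra.
  - exists (Vadd (Vscal Defs.C1 p) (Vscal (Copp (herm p q)) q)). split. exists Defs.C1, (Copp (herm p q)); reflexivity.
    rewrite herm_pair by auto. destruct (herm p q) as [x y]; unfold Cnorm2 in Hgp; simpl in *. lra.
  - exists Defs.C1, Defs.C0. destruct p, q; unfold Vadd, Vscal; simpl; f_equal; ring.
  - exists Defs.C0, Defs.C1. destruct p, q; unfold Vadd, Vscal; simpl; f_equal; ring.
  - apply span_of_det0; auto. apply Hp. apply Hq.
Qed.

Definition Tr a b c := Copp (Cmul (Cmul (herm a b) (herm b c)) (herm c a)).

Lemma ReT a b c : isNull a -> isNull b -> isNull c -> 2 * Re (Tr a b c) = Cnorm2 (det3 a b c).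
Proof.
  intros Ha Hb Hc. pose proof (gram_det a b c) as G. simpl in G.
  rewrite !null_herm_0 in G by auto.
  rewrite (herm_sym a b), (herm_sym b c), (herm_sym c a) in G.
  unfold Tr.
  set (x := herm a b) in *. set (y := herm b c) in *. set (z := herm c a) in *.
  assert (E : Cadd (Cmul (Cmul x y) z) (Cconj (Cmul (Cmul x y) z)) = Copp (RtoC (Cnorm2 (det3 a b c)))).
  { rewrite <- mul_conj, <- G. autorewrite with cj. ring. }
  apply (f_equal Re) in E. destruct (Cmul (Cmul x y) z) as [u v]. unfold RtoC in E; simpl in *. lra.
Qed.

Lemma ReT_pos a b c : isNull a -> isNull b -> isNull c -> ~ samePt a b ->
  ~ onCommonCcircle a b c -> 0 < Re (Tr a b c).
Proof.
  intros Ha Hb Hc Hab Hci. pose proof (ReT a b c Ha Hb Hc) as E.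
  destruct (Cx_neq0_dec (det3 a b c)) as [D|D].
  - exfalso; apply Hci, det0_circle; auto.
  - pose proof (Cnorm2_pos _ D). lra.
Qed.

Lemma Carg_pos z : 0 < Re z -> Carg z = atan (Im z / Re z).
Proof. intros H. unfold Carg. destruct (Rlt_le_dec 0 (Re z)); [reflexivity|lra]. Qed.

Lemma Carg_bound_pos z : 0 < Re z -> - (PI/2) < Carg z < PI/2.
Proof. intros H. rewrite Carg_pos by auto. pose proof (atan_bound (Im z / Re z)). lra. Qed.

Lemma sqrt_pos_form x y : 0 < x -> sqrt (x*x + y*y) = x * sqrt (1 + (y/x)²).
Proof.
  intros Hx. replace (x*x+y*y) with ((x*x) * (1 + (y/x)²)) by (unfold Rsqr; field; lra).
  rewrite sqrt_mult_alt by nra. rewrite sqrt_square by lra. reflexivity.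
Qed.

Lemma Cabs_pos z : z <> Defs.C0 -> 0 < Cabs z.
Proof. intros H. unfold Cabs. apply sqrt_lt_R0, Cnorm2_pos; auto. Qed.

Lemma polar_pos z : 0 < Re z -> z = Cmul (RtoC (Cabs z)) (Cexpi (Carg z)).
Proof.
  intros H. rewrite Carg_pos by auto. destruct z as [x y]; simpl in *.
  unfold Cabs, Cnorm2, Cexpi, RtoC; simpl. rewrite cos_atan, sin_atan.
  rewrite sqrt_pos_form by auto.
  assert (0 < sqrt (1 + (y/x)²)) by (apply sqrt_lt_R0; pose proof (Rle_0_sqr (y/x)); lra).
  apply Cx_ext; simpl; field; lra.
Qed.

Lemma Cexpi_add a b : Cexpi (a + b) = Cmul (Cexpi a) (Cexpi b).
Proof. unfold Cexpi; apply Cx_ext; simpl; [rewrite cos_plus|rewrite sin_plus]; ring. Qed.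
Lemma Cexpi_opp a : Cexpi (- a) = Cconj (Cexpi a).
Proof. unfold Cexpi; apply Cx_ext; simpl; [rewrite cos_neg|rewrite sin_neg]; ring. Qed.
Lemma Cexpi_norm a : Cmul (Cexpi a) (Cconj (Cexpi a)) = Defs.C1.
Proof. unfold Cexpi; apply Cx_ext; simpl; [|ring]. pose proof (sin2_cos2 a). unfold Rsqr in *. lra. Qed.

Lemma Cabs_sq z : Cmul (RtoC (Cabs z)) (RtoC (Cabs z)) = RtoC (Cnorm2 z).
Proof. unfold Cabs. rewrite <- RtoC_mul, sqrt_sqrt by apply Cnorm2_nonneg. reflexivity. Qed.

Lemma Cexpi_mArg z : 0 < Re z -> Cexpi (- Carg z) = Cdiv (Cconj z) (RtoC (Cabs z)).
Proof.
  intros H. assert (Hz : z <> Defs.C0) by (intro E; subst; simpl in H; lra).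
  pose proof (Cabs_pos _ Hz) as Ha. pose proof (RtoC_neq0 _ (Rgt_not_eq _ _ Ha)) as Ha'.
  rewrite (polar_pos z H) at 2. rewrite Cexpi_opp. autorewrite with cj. field. auto.
Qed.

Lemma Cexpi_m2Arg z : 0 < Re z -> Cexpi (- (2 * Carg z)) = Cdiv (Cconj z) z.
Proof.
  intros H. assert (Hz : z <> Defs.C0) by (intro E; subst; simpl in H; lra).
  pose proof (Cabs_pos _ Hz) as Ha. pose proof (RtoC_neq0 _ (Rgt_not_eq _ _ Ha)) as Ha'.
  replace (- (2 * Carg z)) with (- Carg z + - Carg z) by ring. rewrite Cexpi_add, Cexpi_mArg by auto.
  assert (E : Cmul (RtoC (Cabs z)) (RtoC (Cabs z)) = Cmul z (Cconj z)) by (rewrite Cabs_sq, mul_conj; auto).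
  transitivity (Cdiv (Cmul (Cconj z) (Cmul z (Cconj z))) (Cmul z (Cmul (RtoC (Cabs z)) (RtoC (Cabs z))))).
  field; auto. rewrite E. field. split; auto. apply cj_neq0; auto.
Qed.

Lemma Carg_polar_inv rho th : 0 < rho -> - PI < th <= PI ->
  Carg (Cmk (rho * cos th) (rho * sin th)) = th.
Proof.
  intros Hr [Hl Hh]. pose proof PI_RGT_0 as HPI.
  unfold Carg; simpl.
  destruct (Rtotal_order th (PI/2)) as [H1|[H1|H1]];
  [destruct (Rtotal_order th (-(PI/2))) as [H2|[H2|H2]]|..].
  -
    assert (Hc : cos th < 0).
    { replace th with ((th + PI) - PI) by ring. rewrite cos_minus, cos_PI, sin_PI.
      assert (0 < cos (th + PI)) by (apply cos_gt_0; lra). nra. }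
    assert (Hs : sin th < 0) by (apply sin_lt_0_var; lra).
    destruct (Rlt_le_dec 0 (rho * cos th)); [nra|].
    destruct (Rlt_le_dec (rho * cos th) 0); [|nra].
    destruct (Rle_lt_dec 0 (rho * sin th)); [nra|].
    replace (rho * sin th / (rho * cos th)) with (tan (th + PI)).
    + rewrite atan_tan by lra. ring.
    + unfold tan. rewrite neg_sin, neg_cos. field. split; lra.
  - subst th. rewrite cos_neg, sin_neg, cos_PI2, sin_PI2.
    repeat match goal with |- context [Rlt_le_dec ?a ?b] => destruct (Rlt_le_dec a b) end; try lra.
  - assert (Hc : 0 < cos th) by (apply cos_gt_0; lra).
    destruct (Rlt_le_dec 0 (rho * cos th)); [|nra].
    replace (rho * sin th / (rho * cos th)) with (tan th) by (unfold tan; field; lra).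
    apply atan_tan; lra.
  - subst th. rewrite cos_PI2, sin_PI2.
    repeat match goal with |- context [Rlt_le_dec ?a ?b] => destruct (Rlt_le_dec a b) end; try lra.
  - assert (Hc : cos th < 0) by (apply cos_lt_0; lra).
    assert (Hs : 0 <= sin th) by (apply sin_ge_0; lra).
    destruct (Rlt_le_dec 0 (rho * cos th)); [nra|].
    destruct (Rlt_le_dec (rho * cos th) 0); [|nra].
    destruct (Rle_lt_dec 0 (rho * sin th)); [|nra].
    replace (rho * sin th / (rho * cos th)) with (tan (th - PI)).
    + rewrite atan_tan by lra. ring.
    + unfold tan. replace th with ((th - PI) + PI) at 3 4 by ring. rewrite neg_sin, neg_cos.
      assert (cos (th - PI) <> 0).
      { intro E. replace th with ((th - PI) + PI) in Hc by ring. rewrite neg_cos, E in Hc. lra. }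
      field. split; auto. lra.
Qed.

Lemma Carg_polar_inv' rho th : 0 < rho -> - PI < th <= PI ->
  Carg (Cmul (RtoC rho) (Cexpi th)) = th.
Proof.
  intros. transitivity (Carg (Cmk (rho * cos th) (rho * sin th))).
  f_equal. unfold RtoC, Cexpi; apply Cx_ext; simpl; ring. apply Carg_polar_inv; auto.
Qed.

Lemma Carg_scale r z : 0 < r -> Carg (Cmul (RtoC r) z) = Carg z.
Proof.
  intros Hr. destruct z as [x y]. unfold Carg, RtoC; simpl.
  replace (r * x - 0 * y) with (r * x) by ring. replace (r * y + 0 * x) with (r * y) by ring.
  destruct (Req_dec x 0) as [Hx|Hx].
  - subst x. rewrite Rmult_0_r.
    repeat match goal with |- context [Rlt_le_dec ?a ?b] => destruct (Rlt_le_dec a b) end; try nra; reflexivity.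
  - replace (r * y / (r * x)) with (y / x) by (field; lra).
    repeat match goal with |- context [Rlt_le_dec ?a ?b] => destruct (Rlt_le_dec a b) end; try nra;
    repeat match goal with |- context [Rle_lt_dec ?a ?b] => destruct (Rle_lt_dec a b) end; try nra; reflexivity.
Qed.

Lemma RtoC_div x y : y <> 0 -> RtoC (x / y) = Cdiv (RtoC x) (RtoC y).
Proof. intros H. unfold RtoC, Cdiv, Cinv, Cnorm2; apply Cx_ext; simpl; field; auto. Qed.

Lemma Copp_neq0 x : x <> Defs.C0 -> Copp x <> Defs.C0.
Proof. intros H E. apply H. replace x with (Copp (Copp x)) by ring. rewrite E; ring. Qed.

Lemma solve_mu (g12 g23 g31 h12 h23 h31 : Cx) (r : R) :
  g12 <> Defs.C0 -> g23 <> Defs.C0 -> g31 <> Defs.C0 ->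
  h12 <> Defs.C0 -> h23 <> Defs.C0 -> h31 <> Defs.C0 -> 0 < r ->
  Copp (Cmul (Cmul h12 h23) h31) = Cmul (RtoC r) (Copp (Cmul (Cmul g12 g23) g31)) ->
  exists m1 m2 m3, m1 <> Defs.C0 /\ m2 <> Defs.C0 /\ m3 <> Defs.C0 /\
    Cmul (Cmul m1 (Cconj m2)) h12 = g12 /\ Cmul (Cmul m2 (Cconj m3)) h23 = g23 /\
    Cmul (Cmul m3 (Cconj m1)) h31 = g31.
Proof.
  intros G12 G23 G31 H12 H23 H31 Hr HT.
  pose proof (Cnorm2_pos _ G23) as NG. pose proof (Cnorm2_pos _ H23) as NH.
  set (s := sqrt (Cnorm2 h23 / (r * Cnorm2 g23))).
  assert (Hs : 0 < s) by (apply sqrt_lt_R0; apply Rdiv_lt_0_compat; [lra|apply Rmult_lt_0_compat; lra]).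
  assert (Hs2 : Cmul (RtoC s) (RtoC s) = Cdiv (Cmul h23 (Cconj h23)) (Cmul (RtoC r) (Cmul g23 (Cconj g23)))).
  { rewrite <- RtoC_mul. unfold s. rewrite sqrt_sqrt by (apply Rlt_le, Rdiv_lt_0_compat; [lra|apply Rmult_lt_0_compat; lra]).
    rewrite !mul_conj, <- RtoC_mul. apply RtoC_div. apply Rgt_not_eq; apply Rmult_lt_0_compat; lra. }
  assert (Hs' : RtoC s <> Defs.C0) by (apply RtoC_neq0; lra).
  assert (Hr' : RtoC r <> Defs.C0) by (apply RtoC_neq0; lra).
  pose proof (cj_neq0 _ G12). pose proof (cj_neq0 _ G23). pose proof (cj_neq0 _ H12). pose proof (cj_neq0 _ H23).
  exists (RtoC s), (Cdiv (Cconj g12) (Cmul (RtoC s) (Cconj h12))),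
         (Cdiv (Cmul (Cmul (Cconj g23) (RtoC s)) h12) (Cmul g12 (Cconj h23))).
  split; [auto|split; [|split; [|split; [|split]]]].
  - apply Cmul_neq0; auto. apply Cinv_neq0, Cmul_neq0; auto.
  - apply Cmul_neq0; [|apply Cinv_neq0, Cmul_neq0; auto]. apply Cmul_neq0; [apply Cmul_neq0|]; auto.
  - autorewrite with cj. field. repeat split; auto.
  - autorewrite with cj. field. repeat split; auto.
  - autorewrite with cj.
    transitivity (Cdiv (Cmul (Cmul (Cmul (RtoC s) (RtoC s)) (Cmul (Cconj g23) h12)) h31) (Cmul g12 (Cconj h23))).
    field; auto. rewrite Hs2.
    transitivity (Cdiv (Copp (Cmul (Cmul h12 h23) h31)) (Cmul (RtoC r) (Copp (Cmul g12 g23)))).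
    field; repeat split; auto. apply Copp_neq0, Cmul_neq0; auto.
    rewrite HT. field. repeat split; auto. apply Copp_neq0, Cmul_neq0; auto.
Qed.

Definition Eb1 := mkV Defs.C1 Defs.C0 Defs.C0.
Definition Eb2 := mkV Defs.C0 Defs.C1 Defs.C0.
Definition Eb3 := mkV Defs.C0 Defs.C0 Defs.C1.

Section Cr.
Variables a1 a2 a3 : V3.
Definition kk1 z := Cmul (det3 z a2 a3) (Cinv (det3 a1 a2 a3)).
Definition kk2 z := Cmul (det3 a1 z a3) (Cinv (det3 a1 a2 a3)).
Definition kk3 z := Cmul (det3 a1 a2 z) (Cinv (det3 a1 a2 a3)).

Lemma cramer z : det3 a1 a2 a3 <> Defs.C0 -> z = comb3 (kk1 z) (kk2 z) (kk3 z) a1 a2 a3.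
Proof.
  intros HD. unfold kk1, kk2, kk3.
  destruct a1 as [x1 x2 x3], a2 as [y1 y2 y3], a3 as [u1 u2 u3], z as [z1 z2 z3].
  unfold det3 in *; unfold comb3, Vadd, Vscal; simpl. f_equal; field; auto.
Qed.

Definition pick (v : V3) (n : nat) : Cx :=
  match n with 0%nat => v1 v | 1%nat => v2 v | _ => v3 v end.
Definition ebas (n : nat) : V3 :=
  match n with 0%nat => Eb1 | 1%nat => Eb2 | _ => Eb3 end.

Definition Gm (b1 b2 b3 : V3) (m1 m2 m3 : Cx) : M3 := fun r c =>
  Cadd (Cadd (Cmul (Cmul (kk1 (ebas c)) m1) (pick b1 r))
             (Cmul (Cmul (kk2 (ebas c)) m2) (pick b2 r)))
       (Cmul (Cmul (kk3 (ebas c)) m3) (pick b3 r)).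

Lemma mv_Gm b1 b2 b3 m1 m2 m3 z :
  mv (Gm b1 b2 b3 m1 m2 m3) z = comb3 (Cmul (kk1 z) m1) (Cmul (kk2 z) m2) (Cmul (kk3 z) m3) b1 b2 b3.
Proof.
  unfold Gm, kk1, kk2, kk3, mv, comb3, Vadd, Vscal, ebas, pick, Eb1, Eb2, Eb3.
  set (Di := Cinv (det3 a1 a2 a3)).
  destruct a1 as [x1 x2 x3], a2 as [y1 y2 y3], a3 as [u1 u2 u3], z as [z1 z2 z3],
    b1, b2, b3. unfold det3; simpl. f_equal; ring.
Qed.
End Cr.

Lemma comb3_unit1 m b1 b2 b3 : comb3 (Cmul Defs.C1 m) (Cmul Defs.C0 Defs.C0) (Cmul Defs.C0 Defs.C0) b1 b2 b3 = Vscal m b1.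
Proof. destruct b1, b2, b3; unfold comb3, Vadd, Vscal; simpl; f_equal; ring. Qed.

Lemma triple a1 a2 a3 b1 b2 b3 r :
  isNull a1 -> isNull a2 -> isNull a3 -> isNull b1 -> isNull b2 -> isNull b3 ->
  det3 a1 a2 a3 <> Defs.C0 ->
  herm a1 a2 <> Defs.C0 -> herm a2 a3 <> Defs.C0 -> herm a3 a1 <> Defs.C0 ->
  herm b1 b2 <> Defs.C0 -> herm b2 b3 <> Defs.C0 -> herm b3 b1 <> Defs.C0 ->
  0 < r -> Tr b1 b2 b3 = Cmul (RtoC r) (Tr a1 a2 a3) ->
  exists G m1 m2 m3, isU21 G /\ m1 <> Defs.C0 /\ m2 <> Defs.C0 /\ m3 <> Defs.C0 /\
    mv G a1 = Vscal m1 b1 /\ mv G a2 = Vscal m2 b2 /\ mv G a3 = Vscal m3 b3.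
Proof.
  intros N1 N2 N3 M1 M2 M3 HD G12 G23 G31 H12 H23 H31 Hr HT.
  destruct (solve_mu _ _ _ _ _ _ r G12 G23 G31 H12 H23 H31 Hr HT)
    as [m1 [m2 [m3 [Hm1 [Hm2 [Hm3 [E12 [E23 E31]]]]]]]].
  exists (Gm a1 a2 a3 b1 b2 b3 m1 m2 m3), m1, m2, m3.
  assert (K : forall x y : V3, det3 x x y = Defs.C0 /\ det3 x y x = Defs.C0 /\ det3 y x x = Defs.C0).
  { intros [] []; unfold det3; repeat split; ring. }
  repeat split; auto.
  - intros z w. rewrite !mv_Gm, herm_comb3.
    transitivity (herm (comb3 (kk1 a1 a2 a3 z) (kk2 a1 a2 a3 z) (kk3 a1 a2 a3 z) a1 a2 a3)
                       (comb3 (kk1 a1 a2 a3 w) (kk2 a1 a2 a3 w) (kk3 a1 a2 a3 w) a1 a2 a3)).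
    2:{ rewrite <- !cramer by auto. reflexivity. }
    rewrite herm_comb3.
    assert (E21 : Cmul (Cmul m2 (Cconj m1)) (herm b2 b1) = herm a2 a1).
    { rewrite (herm_sym b1 b2), (herm_sym a1 a2), <- E12. autorewrite with cj. ring. }
    assert (E32 : Cmul (Cmul m3 (Cconj m2)) (herm b3 b2) = herm a3 a2).
    { rewrite (herm_sym b2 b3), (herm_sym a2 a3), <- E23. autorewrite with cj. ring. }
    assert (E13 : Cmul (Cmul m1 (Cconj m3)) (herm b1 b3) = herm a1 a3).
    { rewrite (herm_sym b3 b1), (herm_sym a3 a1), <- E31. autorewrite with cj. ring. }
    rewrite <- E12, <- E23, <- E31, <- E21, <- E32, <- E13.
    rewrite !(null_herm_0 a1), !(null_herm_0 a2), !(null_herm_0 a3),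
      !(null_herm_0 b1), !(null_herm_0 b2), !(null_herm_0 b3) by auto.
    autorewrite with cj. ring.
  - rewrite mv_Gm. unfold kk1, kk2, kk3.
    destruct (K a1 a3) as [Ka _]. destruct (K a1 a2) as [_ [Kb _]].
    rewrite Ka, Kb. destruct b1, b2, b3; unfold comb3, Vadd, Vscal; simpl; f_equal; field; auto.
  - rewrite mv_Gm. unfold kk1, kk2, kk3.
    destruct (K a2 a3) as [Ka _]. destruct (K a2 a1) as [_ [_ Kb]].
    rewrite Ka, Kb. destruct b1, b2, b3; unfold comb3, Vadd, Vscal; simpl; f_equal; field; auto.
  - rewrite mv_Gm. unfold kk1, kk2, kk3.
    destruct (K a3 a2) as [_ [Ka _]]. destruct (K a3 a1) as [_ [_ Kb]].
    rewrite Ka, Kb. destruct b1, b2, b3; unfold comb3, Vadd, Vscal; simpl; f_equal; field; auto.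
Qed.

Section Gram.
Variables g12 g23 g31 g41 g42 g43 : Cx.
Definition XX1 := Cdiv (Cmul g42 g31) (Cmul g41 (Cconj g23)).
Definition XX2 := Cdiv (Cmul g43 (Cconj g12)) (Cmul g41 g23).
Definition NN := Csub (Cadd (Cmul (Cmul g42 g31) g23) (Cmul (Cmul g43 (Cconj g12)) (Cconj g23)))
                      (Cmul (Cmul g41 (Cconj g23)) g23).
Definition TT1 := Copp (Cmul (Cmul g12 g23) g31).
Definition TT4 := Copp (Cmul (Cmul g42 g23) (Cconj g43)).
End Gram.

Lemma add_conj z : Cadd z (Cconj z) = RtoC (2 * Re z).
Proof. unfold RtoC; cxe. Qed.
Lemma Re_R r : Re (RtoC r) = r. Proof. reflexivity. Qed.

Ltac nzz := repeat (first [assumption | exact C1_neq_C0 | apply Copp_neq0 | apply Cmul_neq0 | apply cj_neq0 | apply Cinv_neq0]).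
Ltac nz := repeat split; auto; nzz.

Lemma L_Z g12 g23 g31 g41 g42 g43 :
  g23 <> Defs.C0 -> g41 <> Defs.C0 ->
  Csub (Cadd (XX1 g23 g31 g41 g42) (XX2 g12 g23 g41 g43)) Defs.C1 =
  Cdiv (NN g12 g23 g31 g41 g42 g43) (Cmul (Cmul g41 (Cconj g23)) g23).
Proof. intros. unfold XX1, XX2, NN. field. nz. Qed.

Lemma L_ident g12 g23 g31 g41 g42 g43 :
  g12 <> Defs.C0 -> g23 <> Defs.C0 -> g31 <> Defs.C0 -> g41 <> Defs.C0 ->
  Cmul (NN g12 g23 g31 g41 g42 g43) (Cconj (NN g12 g23 g31 g41 g42 g43)) =
  Cmul (Cadd (TT1 g12 g23 g31) (Cconj (TT1 g12 g23 g31)))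
       (Cadd (TT4 g23 g42 g43) (Cconj (TT4 g23 g42 g43))) ->
  0 < Re (TT1 g12 g23 g31) ->
  Cnorm2 (Csub (Cadd (XX1 g23 g31 g41 g42) (XX2 g12 g23 g41 g43)) Defs.C1) =
  2 * Re (Cmul (Cmul (XX1 g23 g31 g41 g42) (Cconj (XX2 g12 g23 g41 g43)))
                (Cadd Defs.C1 (Cexpi (- (2 * Carg (TT1 g12 g23 g31)))))).
Proof.
  intros H12 H23 H31 H41 Hrel Hpos.
  assert (HT : TT1 g12 g23 g31 <> Defs.C0) by (intro E; rewrite E in Hpos; simpl in Hpos; lra).
  rewrite Cexpi_m2Arg by auto. rewrite L_Z by auto.
  rewrite <- (Re_R (Cnorm2 _)), <- mul_conj.
  rewrite <- (Re_R (2 * Re _)), <- add_conj. f_equal.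
  set (den := Cmul (Cmul g41 (Cconj g23)) g23).
  assert (Hden : den <> Defs.C0) by (unfold den; repeat apply Cmul_neq0; auto; apply cj_neq0; auto).
  transitivity (Cdiv (Cmul (NN g12 g23 g31 g41 g42 g43) (Cconj (NN g12 g23 g31 g41 g42 g43)))
                     (Cmul den (Cconj den))).
  { autorewrite with cj. field. nz. }
  rewrite Hrel. unfold den, TT1, TT4, XX1, XX2 in *. autorewrite with cj.
  field. nz.
Qed.

Lemma RtoC_invn x : x <> Defs.C0 -> RtoC (/ Cnorm2 x) = Cdiv Defs.C1 (Cmul x (Cconj x)).
Proof. intros H. pose proof (Cnorm2_pos _ H). rewrite mul_conj.
  set (n := Cnorm2 x) in *. unfold RtoC, Cdiv, Cinv; apply Cx_ext; unfold Cnorm2; simpl; field; lra. Qed.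

Lemma RtoC_inv r : r <> 0 -> RtoC (/ r) = Cdiv Defs.C1 (RtoC r).
Proof. intros H. unfold RtoC, Cdiv, Cinv, Cnorm2; apply Cx_ext; simpl; field; auto. Qed.

Lemma ReT_neq0 z : 0 < Re z -> z <> Defs.C0.
Proof. intros H E; rewrite E in H; simpl in H; lra. Qed.

Lemma L_Nnz g12 g23 g31 g41 g42 g43 :
  Cmul (NN g12 g23 g31 g41 g42 g43) (Cconj (NN g12 g23 g31 g41 g42 g43)) =
  Cmul (Cadd (TT1 g12 g23 g31) (Cconj (TT1 g12 g23 g31)))
       (Cadd (TT4 g23 g42 g43) (Cconj (TT4 g23 g42 g43))) ->
  0 < Re (TT1 g12 g23 g31) -> 0 < Re (TT4 g23 g42 g43) ->
  NN g12 g23 g31 g41 g42 g43 <> Defs.C0.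
Proof.
  intros Hrel P1 P4 E. rewrite E, !add_conj in Hrel.
  rewrite <- RtoC_mul in Hrel. replace (Cmul Defs.C0 (Cconj Defs.C0)) with (RtoC 0) in Hrel by (unfold RtoC; cxe).
  apply RtoC_inj in Hrel. nra.
Qed.

Lemma L_pos g12 g23 g31 g41 g42 g43 :
  g12 <> Defs.C0 -> g23 <> Defs.C0 -> g31 <> Defs.C0 -> g41 <> Defs.C0 ->
  0 < Re (TT1 g12 g23 g31) -> 0 < Re (TT4 g23 g42 g43) ->
  Re (Cmul (Cmul (XX1 g23 g31 g41 g42) (Cconj (XX2 g12 g23 g41 g43)))
           (Cexpi (- Carg (TT1 g12 g23 g31)))) > 0.
Proof.
  intros H12 H23 H31 H41 P1 P4.
  pose proof (ReT_neq0 _ P1) as HT.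
  pose proof (Cabs_pos _ HT) as Ha.
  rewrite Cexpi_mArg by auto.
  set (c := Cnorm2 (TT1 g12 g23 g31) * / Cabs (TT1 g12 g23 g31) * / Cnorm2 g41 * / Cnorm2 g23 * / Cnorm2 g23).
  assert (Hc : 0 < c).
  { unfold c. pose proof (Cnorm2_pos _ HT). pose proof (Cnorm2_pos _ H41). pose proof (Cnorm2_pos _ H23).
    repeat apply Rmult_lt_0_compat; auto; apply Rinv_0_lt_compat; auto. }
  replace (Cmul (Cmul (XX1 g23 g31 g41 g42) (Cconj (XX2 g12 g23 g41 g43)))
             (Cdiv (Cconj (TT1 g12 g23 g31)) (RtoC (Cabs (TT1 g12 g23 g31)))))
    with (Cmul (RtoC c) (TT4 g23 g42 g43)).
  - rewrite Re_RtoC_mul. nra.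
  - pose proof (Cnorm2_pos _ HT). pose proof (Cnorm2_pos _ H41). pose proof (Cnorm2_pos _ H23).
    assert (HA : RtoC (Cabs (TT1 g12 g23 g31)) <> Defs.C0) by (apply RtoC_neq0; lra).
    unfold c. rewrite !RtoC_mul, !RtoC_inv by lra. rewrite <- !mul_conj.
    unfold XX1, XX2, TT1, TT4 in *. autorewrite with cj. field. nz.
Qed.

Lemma expi_arg z : 0 < Re z -> Cexpi (Carg z) = Cdiv z (RtoC (Cabs z)).
Proof.
  intros H. pose proof (ReT_neq0 _ H) as Hz. pose proof (Cabs_pos _ Hz).
  assert (HA : RtoC (Cabs z) <> Defs.C0) by (apply RtoC_neq0; lra).
  rewrite (polar_pos z H) at 2. field. auto.
Qed.

Lemma L_arg g12 g23 g31 g41 g42 g43 :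
  g12 <> Defs.C0 -> g23 <> Defs.C0 -> g31 <> Defs.C0 -> g41 <> Defs.C0 ->
  g42 <> Defs.C0 -> g43 <> Defs.C0 ->
  0 < Re (TT1 g12 g23 g31) -> 0 < Re (TT4 g23 g42 g43) ->
  Carg (Cdiv (XX1 g23 g31 g41 g42) (XX2 g12 g23 g41 g43)) =
  Carg (TT1 g12 g23 g31) + Carg (TT4 g23 g42 g43).
Proof.
  intros H12 H23 H31 H41 H42 H43 P1 P4.
  pose proof (ReT_neq0 _ P1) as HT1. pose proof (ReT_neq0 _ P4) as HT4.
  pose proof (Cabs_pos _ HT1). pose proof (Cabs_pos _ HT4).
  pose proof (Cnorm2_pos _ H12). pose proof (Cnorm2_pos _ H23). pose proof (Cnorm2_pos _ H43).
  set (rho := Cabs (TT1 g12 g23 g31) * Cabs (TT4 g23 g42 g43) * / Cnorm2 g12 * / Cnorm2 g23 * / Cnorm2 g43).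
  assert (Hr : 0 < rho).
  { unfold rho. repeat apply Rmult_lt_0_compat; auto; apply Rinv_0_lt_compat; auto. }
  pose proof (Carg_bound_pos _ P1). pose proof (Carg_bound_pos _ P4).
  rewrite <- (Carg_polar_inv' rho (Carg (TT1 g12 g23 g31) + Carg (TT4 g23 g42 g43))) by (auto; lra).
  f_equal. rewrite Cexpi_add, !expi_arg by auto.
  assert (HA1 : RtoC (Cabs (TT1 g12 g23 g31)) <> Defs.C0) by (apply RtoC_neq0; lra).
  assert (HA4 : RtoC (Cabs (TT4 g23 g42 g43)) <> Defs.C0) by (apply RtoC_neq0; lra).
  unfold rho. rewrite !RtoC_mul, !RtoC_inv by lra. rewrite <- !mul_conj.
  unfold XX1, XX2, TT1, TT4 in *. autorewrite with cj. field. nz.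
Qed.

Lemma herm_comb3_l c1 c2 c3 x1 x2 x3 w :
  herm (comb3 c1 c2 c3 x1 x2 x3) w =
  Cadd (Cadd (Cmul c1 (herm x1 w)) (Cmul c2 (herm x2 w))) (Cmul c3 (herm x3 w)).
Proof. destruct x1, x2, x3, w; unfold comb3, herm, Vadd, Vscal; simpl. ring. Qed.

Lemma rel_from_basis p1 p2 p3 p4 :
  isNull p1 -> isNull p2 -> isNull p3 -> isNull p4 -> det3 p1 p2 p3 <> Defs.C0 ->
  let g12 := herm p1 p2 in let g23 := herm p2 p3 in let g31 := herm p3 p1 in
  let g41 := herm p4 p1 in let g42 := herm p4 p2 in let g43 := herm p4 p3 in
  Cmul (NN g12 g23 g31 g41 g42 g43) (Cconj (NN g12 g23 g31 g41 g42 g43)) =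
  Cmul (Cadd (TT1 g12 g23 g31) (Cconj (TT1 g12 g23 g31)))
       (Cadd (TT4 g23 g42 g43) (Cconj (TT4 g23 g42 g43))).
Proof.
  intros N1 N2 N3 N4 HD. intros.
  pose proof (cramer p1 p2 p3 p4 HD) as Ecr.
  set (al := kk1 p1 p2 p3 p4) in Ecr. set (be := kk2 p1 p2 p3 p4) in Ecr. set (ga := kk3 p1 p2 p3 p4) in Ecr.
  clearbody al be ga.
  pose proof (null_herm_0 _ N4) as Hn.
  unfold g12, g23, g31, g41, g42, g43, NN, TT1, TT4.
  rewrite Ecr in Hn |- *. rewrite herm_comb3 in Hn. rewrite !herm_comb3_l.
  rewrite !(null_herm_0 p1), !(null_herm_0 p2), !(null_herm_0 p3) in * by auto.
  rewrite (herm_sym p1 p2), (herm_sym p2 p3), (herm_sym p3 p1) in *.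
  autorewrite with cj in *.
  match type of Hn with ?E = _ => match goal with |- _ = ?R =>
    transitivity (Cadd R (Cmul (Copp (Cmul (Cmul (herm p2 p3) (Cconj (herm p2 p3)))
        (Cadd (Cmul (Cmul (herm p1 p2) (herm p2 p3)) (herm p3 p1))
              (Cmul (Cmul (Cconj (herm p1 p2)) (Cconj (herm p2 p3))) (Cconj (herm p3 p1)))))) E)) end end.
  - ring.
  - rewrite Hn. ring.
Qed.

Lemma det_nz p q r : isNull p -> isNull q -> isNull r -> ~ samePt p q ->
  ~ onCommonCcircle p q r -> det3 p q r <> Defs.C0.
Proof. intros Hp Hq Hr Hs Hc E. apply Hc, det0_circle; auto. Qed.

Lemma hnz p q : isNull p -> isNull q -> ~ samePt q p -> herm p q <> Defs.C0.
Proof. intros Hp Hq Hs. apply herm_neq0; auto. intro E; apply Hs, samePt_sym; auto. Qed.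

Lemma part1 P : inC4'' P -> let '(x1, x2, a) := B0 P in inV4 x1 x2 a.
Proof.
  destruct P as [p1 p2 p3 p4]. unfold inC4''; simpl.
  intros (N1&N2&N3&N4&S12&S13&S14&S23&S24&S34&C123&C234&Orb).
  unfold B0; simpl.
  assert (H12 : herm p1 p2 <> Defs.C0) by (apply herm_neq0; auto).
  assert (H23 : herm p2 p3 <> Defs.C0) by (apply herm_neq0; auto).
  assert (H31 : herm p3 p1 <> Defs.C0) by (apply hnz; auto).
  assert (H41 : herm p4 p1 <> Defs.C0) by (apply hnz; auto).
  assert (H42 : herm p4 p2 <> Defs.C0) by (apply hnz; auto).
  assert (H43 : herm p4 p3 <> Defs.C0) by (apply hnz; auto).
  assert (H34 : herm p3 p4 <> Defs.C0) by (apply herm_neq0; auto).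
  assert (HD : det3 p1 p2 p3 <> Defs.C0) by (apply det_nz; auto).
  assert (P1 : 0 < Re (TT1 (herm p1 p2) (herm p2 p3) (herm p3 p1))) by (apply ReT_pos; auto).
  assert (E4 : TT4 (herm p2 p3) (herm p4 p2) (herm p4 p3) = Tr p2 p3 p4).
  { unfold TT4, Tr. rewrite (herm_sym p4 p3). ring. }
  assert (P4 : 0 < Re (TT4 (herm p2 p3) (herm p4 p2) (herm p4 p3))) by (rewrite E4; apply ReT_pos; auto).
  assert (EX1 : crossX p1 p2 p3 p4 = XX1 (herm p2 p3) (herm p3 p1) (herm p4 p1) (herm p4 p2)).
  { unfold crossX, XX1. rewrite (herm_sym p2 p3). reflexivity. }
  assert (EX2 : crossX p1 p3 p2 p4 = XX2 (herm p1 p2) (herm p2 p3) (herm p4 p1) (herm p4 p3)).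
  { unfold crossX, XX2. rewrite (herm_sym p1 p2). reflexivity. }
  assert (EA : cartanA p1 p2 p3 = Carg (TT1 (herm p1 p2) (herm p2 p3) (herm p3 p1))) by reflexivity.
  pose proof (rel_from_basis p1 p2 p3 p4 N1 N2 N3 N4 HD) as Hrel. simpl in Hrel.
  rewrite EX1, EX2, EA.
  split; [|split; [|split; [|split]]].
  - apply Carg_bound_pos; auto.
  - apply L_ident; auto.
  - rewrite L_Z by auto. apply Cmul_neq0. apply L_Nnz; auto. nzz.
  - apply L_pos; auto.
  - intro E. rewrite L_arg in E by auto.
    assert (EA4 : Carg (TT4 (herm p2 p3) (herm p4 p2) (herm p4 p3)) = Carg (TT1 (herm p1 p2) (herm p2 p3) (herm p3 p1))) by lra.
    set (T1 := TT1 (herm p1 p2) (herm p2 p3) (herm p3 p1)) in *.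
    set (T4 := TT4 (herm p2 p3) (herm p4 p2) (herm p4 p3)) in *.
    pose proof (ReT_neq0 _ P1) as HT1. pose proof (Cabs_pos _ HT1).
    pose proof (ReT_neq0 _ P4) as HT4. pose proof (Cabs_pos _ HT4).
    assert (Erel : T4 = Cmul (RtoC (Cabs T4 / Cabs T1)) T1).
    { rewrite (polar_pos T4 P4) at 1. rewrite EA4. rewrite (polar_pos T1 P1) at 3.
      rewrite RtoC_div by lra.
      assert (RtoC (Cabs T1) <> Defs.C0) by (apply RtoC_neq0; lra). field. auto. }
    destruct (triple p1 p2 p3 p4 p2 p3 (Cabs T4 / Cabs T1)) as [G [m1 [m2 [m3 [HG [Hm1 [Hm2 [Hm3 [G1 [G2 G3]]]]]]]]]]; auto.
    + apply Rdiv_lt_0_compat; auto.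
    + replace (Tr p4 p2 p3) with T4 by (unfold T4, TT4, Tr; rewrite (herm_sym p4 p3); ring).
      exact Erel.
    + apply Orb. exists G. split; auto. split; [|split].
      * exists m2; auto.
      * exists m3; auto.
      * exists m1; auto.
Qed.

Lemma Cdiv_0 x : Cdiv x Defs.C0 = Defs.C0.
Proof. unfold Cdiv, Cinv, Cnorm2; apply Cx_ext; simpl; unfold Rdiv; ring. Qed.

Lemma Cdiv_scale c n d : c <> Defs.C0 -> Cdiv (Cmul c n) (Cmul c d) = Cdiv n d.
Proof.
  intros Hc. destruct (Cx_neq0_dec d) as [Hd|Hd].
  - subst d. replace (Cmul c Defs.C0) with Defs.C0 by ring. rewrite !Cdiv_0; auto.
  - field. split; auto.
Qed.

Lemma herm_G G x y l m : isU21 G ->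
  herm (Vscal l (mv G x)) (Vscal m (mv G y)) = Cmul (Cmul l (Cconj m)) (herm x y).
Proof. intros HG. rewrite herm_scal, HG. reflexivity. Qed.

Lemma part2 P Q : quadEquiv P Q -> B0 P = B0 Q.
Proof.
  destruct P as [p1 p2 p3 p4], Q as [q1 q2 q3 q4].
  intros [G [HG [[l1 [L1 E1]] [[l2 [L2 E2]] [[l3 [L3 E3]] [l4 [L4 E4]]]]]]]. simpl in *.
  subst. unfold B0, crossX, cartanA; simpl. rewrite !herm_G by auto.
  f_equal; [f_equal|].
  - set (c := Cmul (Cmul (Cmul l4 (Cconj l2)) l3) (Cconj l1)).
    assert (c <> Defs.C0) by (unfold c; nzz).
    rewrite <- (Cdiv_scale c) by auto. f_equal; unfold c; ring.
  - set (c := Cmul (Cmul (Cmul l4 (Cconj l3)) l2) (Cconj l1)).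
    assert (c <> Defs.C0) by (unfold c; nzz).
    rewrite <- (Cdiv_scale c) by auto. f_equal; unfold c; ring.
  - pose proof (Cnorm2_pos _ L1). pose proof (Cnorm2_pos _ L2). pose proof (Cnorm2_pos _ L3).
    rewrite <- (Carg_scale (Cnorm2 l1 * Cnorm2 l2 * Cnorm2 l3)) by (repeat apply Rmult_lt_0_compat; auto).
    f_equal. rewrite !RtoC_mul, <- !mul_conj. ring.
Qed.

Lemma herm_comb3_r c1 c2 c3 x1 x2 x3 w :
  herm w (comb3 c1 c2 c3 x1 x2 x3) =
  Cadd (Cadd (Cmul (Cconj c1) (herm w x1)) (Cmul (Cconj c2) (herm w x2))) (Cmul (Cconj c3) (herm w x3)).
Proof. destruct x1, x2, x3, w; unfold comb3, herm, Vadd, Vscal; simpl. autorewrite with cj. ring. Qed.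

Lemma nondeg v q1 q2 q3 : det3 q1 q2 q3 <> Defs.C0 ->
  herm v q1 = Defs.C0 -> herm v q2 = Defs.C0 -> herm v q3 = Defs.C0 -> v = V0.
Proof.
  intros HD H1 H2 H3.
  assert (K : forall e, herm v e = Defs.C0).
  { intros e. rewrite (cramer q1 q2 q3 e HD), herm_comb3_r, H1, H2, H3. ring. }
  pose proof (K Eb1) as K1. pose proof (K Eb2) as K2. pose proof (K Eb3) as K3.
  destruct v as [a b c]; unfold herm, Eb1, Eb2, Eb3 in *; simpl in *. autorewrite with cj in *.
  unfold V0; f_equal.
  - rewrite <- K3; ring.
  - rewrite <- K2; ring.
  - rewrite <- K1; ring.
Qed.

Lemma Vscal_inv m x y : m <> Defs.C0 -> x = Vscal m y -> y = Vscal (Cinv m) x.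
Proof. intros Hm ->. rewrite Vscal_Vscal. replace (Cmul (Cinv m) m) with Defs.C1 by (field; auto).
  rewrite Vscal_1; reflexivity. Qed.

Lemma Vadd_opp_0 x z c : Vadd x (Vscal (Copp c) z) = V0 -> x = Vscal c z.
Proof.
  destruct x as [x1 x2 x3], z as [z1 z2 z3]. unfold Vadd, Vscal, V0. intros H.
  pose proof (f_equal v1 H) as H1; pose proof (f_equal v2 H) as H2; pose proof (f_equal v3 H) as H3; simpl in *.
  f_equal.
  - replace x1 with (Cadd (Cadd x1 (Cmul (Copp c) z1)) (Cmul c z1)) by ring. rewrite H1; ring.
  - replace x2 with (Cadd (Cadd x2 (Cmul (Copp c) z2)) (Cmul c z2)) by ring. rewrite H2; ring.
  - replace x3 with (Cadd (Cadd x3 (Cmul (Copp c) z3)) (Cmul c z3)) by ring. rewrite H3; ring.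
Qed.

Lemma part3 P Q : inC4'' P -> inC4'' Q -> B0 P = B0 Q -> quadEquiv P Q.
Proof.
  destruct P as [p1 p2 p3 p4], Q as [q1 q2 q3 q4]. unfold inC4''; simpl.
  intros (N1&N2&N3&N4&S12&S13&S14&S23&S24&S34&C123&C234&Orb)
         (M1&M2&M3&M4&R12&R13&R14&R23&R24&R34&D123&D234&Orb').
  unfold B0; simpl. intros EB.
  pose proof (f_equal (fun t => fst (fst t)) EB) as EX1.
  pose proof (f_equal (fun t => snd (fst t)) EB) as EX2.
  pose proof (f_equal (fun t => snd t) EB) as EA. cbv beta iota in EX1, EX2, EA. simpl in EX1, EX2, EA.
  clear EB.
  assert (G12 : herm p1 p2 <> Defs.C0) by (apply herm_neq0; auto).
  assert (G23 : herm p2 p3 <> Defs.C0) by (apply herm_neq0; auto).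
  assert (G31 : herm p3 p1 <> Defs.C0) by (apply hnz; auto).
  assert (G41 : herm p4 p1 <> Defs.C0) by (apply hnz; auto).
  assert (G42 : herm p4 p2 <> Defs.C0) by (apply hnz; auto).
  assert (G43 : herm p4 p3 <> Defs.C0) by (apply hnz; auto).
  assert (H12 : herm q1 q2 <> Defs.C0) by (apply herm_neq0; auto).
  assert (H23 : herm q2 q3 <> Defs.C0) by (apply herm_neq0; auto).
  assert (H31 : herm q3 q1 <> Defs.C0) by (apply hnz; auto).
  assert (H41 : herm q4 q1 <> Defs.C0) by (apply hnz; auto).
  assert (H42 : herm q4 q2 <> Defs.C0) by (apply hnz; auto).
  assert (H43 : herm q4 q3 <> Defs.C0) by (apply hnz; auto).
  assert (H32 : herm q3 q2 <> Defs.C0) by (apply hnz; auto).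
  assert (H21 : herm q2 q1 <> Defs.C0) by (apply hnz; auto).
  assert (HDp : det3 p1 p2 p3 <> Defs.C0) by (apply det_nz; auto).
  assert (HDq : det3 q1 q2 q3 <> Defs.C0) by (apply det_nz; auto).
  assert (P1 : 0 < Re (Tr p1 p2 p3)) by (apply ReT_pos; auto).
  assert (Q1 : 0 < Re (Tr q1 q2 q3)) by (apply ReT_pos; auto).
  pose proof (ReT_neq0 _ P1) as HT1. pose proof (Cabs_pos _ HT1).
  pose proof (ReT_neq0 _ Q1) as HT2. pose proof (Cabs_pos _ HT2).
  assert (Erel : Tr q1 q2 q3 = Cmul (RtoC (Cabs (Tr q1 q2 q3) / Cabs (Tr p1 p2 p3))) (Tr p1 p2 p3)).
  { rewrite (polar_pos (Tr q1 q2 q3) Q1) at 1.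
    change (Carg (Tr q1 q2 q3)) with (cartanA q1 q2 q3). rewrite <- EA.
    change (cartanA p1 p2 p3) with (Carg (Tr p1 p2 p3)).
    rewrite (expi_arg _ P1). rewrite RtoC_div by lra.
    assert (RtoC (Cabs (Tr p1 p2 p3)) <> Defs.C0) by (apply RtoC_neq0; lra). field. auto. }
  destruct (triple p1 p2 p3 q1 q2 q3 (Cabs (Tr q1 q2 q3) / Cabs (Tr p1 p2 p3)))
    as [G [m1 [m2 [m3 [HG [Hm1 [Hm2 [Hm3 [F1 [F2 F3]]]]]]]]]]; auto.
  { apply Rdiv_lt_0_compat; auto. }
  assert (Rel : forall i j mi, mv G i = Vscal mi j -> forall k l mk, mv G k = Vscal mk l ->
            Cmul (Cmul mi (Cconj mk)) (herm j l) = herm i k).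
  { intros i j mi Fi k l mk Fk. rewrite <- (HG i k), Fi, Fk, herm_scal. reflexivity. }
  set (y := mv G p4).
  assert (Y : forall k l mk, mv G k = Vscal mk l -> Cmul (Cconj mk) (herm y l) = herm p4 k).
  { intros k l mk Fk. unfold y. rewrite <- (HG p4 k), Fk, herm_scal_r. reflexivity. }
  pose proof (Y _ _ _ F1) as Y1. pose proof (Y _ _ _ F2) as Y2. pose proof (Y _ _ _ F3) as Y3.
  pose proof (Rel _ _ _ F3 _ _ _ F1) as K31. pose proof (Rel _ _ _ F3 _ _ _ F2) as K32.
  pose proof (Rel _ _ _ F2 _ _ _ F1) as K21. pose proof (Rel _ _ _ F2 _ _ _ F3) as K23.
  set (c := Cdiv (Cdiv (herm p4 p1) (Cconj m1)) (herm q4 q1)).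
  assert (Hc : c <> Defs.C0) by (unfold c; nzz).
  assert (Ey : y = Vscal c q4).
  { assert (V : Vadd y (Vscal (Copp c) q4) = V0).
    { apply (nondeg _ q1 q2 q3 HDq); rewrite herm_add_l, herm_scal_l.
      - replace (herm y q1) with (Cdiv (herm p4 p1) (Cconj m1)) by (rewrite <- Y1; field; nz).
        unfold c. field. nz.
      - replace (herm y q2) with (Cdiv (herm p4 p2) (Cconj m2)) by (rewrite <- Y2; field; nz).
        unfold crossX in EX1. rewrite <- K31, <- K32 in EX1.
        match type of EX1 with ?L = ?R =>
          transitivity (Cmul (Csub L R) (Cdiv (Cmul (herm p4 p1) (herm q3 q2)) (Cmul (Cconj m1) (herm q3 q1)))) end.
        + unfold c. field. nz.
        + rewrite EX1. ring.
      - replace (herm y q3) with (Cdiv (herm p4 p3) (Cconj m3)) by (rewrite <- Y3; field; nz).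
        unfold crossX in EX2. rewrite <- K21, <- K23 in EX2.
        match type of EX2 with ?L = ?R =>
          transitivity (Cmul (Csub L R) (Cdiv (Cmul (herm p4 p1) (herm q2 q3)) (Cmul (Cconj m1) (herm q2 q1)))) end.
        + unfold c. field. nz.
        + rewrite EX2. ring. }
    apply Vadd_opp_0; auto. }
  exists G. split; auto. split; [|split; [|split]].
  - exists (Cinv m1). split. nzz. apply Vscal_inv; auto.
  - exists (Cinv m2). split. nzz. apply Vscal_inv; auto.
  - exists (Cinv m3). split. nzz. apply Vscal_inv; auto.
  - exists (Cinv c). split. nzz. apply Vscal_inv; auto.
Qed.

Lemma orbit_T G x1 x2 x3 y1 y2 y3 l1 l2 l3 : isU21 G ->
  l1 <> Defs.C0 -> l2 <> Defs.C0 -> l3 <> Defs.C0 ->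
  mv G x1 = Vscal l1 y1 -> mv G x2 = Vscal l2 y2 -> mv G x3 = Vscal l3 y3 ->
  exists r, 0 < r /\ Tr y1 y2 y3 = Cmul (RtoC r) (Tr x1 x2 x3).
Proof.
  intros HG L1 L2 L3 F1 F2 F3.
  pose proof (Cnorm2_pos _ L1). pose proof (Cnorm2_pos _ L2). pose proof (Cnorm2_pos _ L3).
  exists (/ (Cnorm2 l1 * Cnorm2 l2 * Cnorm2 l3)). split.
  { apply Rinv_0_lt_compat. repeat apply Rmult_lt_0_compat; auto. }
  unfold Tr. rewrite <- (HG x1 x2), <- (HG x2 x3), <- (HG x3 x1), F1, F2, F3, !herm_scal.
  rewrite RtoC_inv by (apply Rgt_not_eq; repeat apply Rmult_lt_0_compat; auto).
  rewrite !RtoC_mul, <- !mul_conj. field. nz.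
Qed.

Lemma GenArg p1 p2 p3 p4 r :
  herm p1 p2 <> Defs.C0 -> herm p2 p3 <> Defs.C0 -> herm p3 p1 <> Defs.C0 ->
  herm p4 p1 <> Defs.C0 -> herm p4 p2 <> Defs.C0 -> herm p4 p3 <> Defs.C0 ->
  0 < Re (Tr p1 p2 p3) -> 0 < r -> Tr p4 p2 p3 = Cmul (RtoC r) (Tr p1 p2 p3) ->
  Carg (Cdiv (crossX p1 p2 p3 p4) (crossX p1 p3 p2 p4)) = 2 * cartanA p1 p2 p3.
Proof.
  intros H12 H23 H31 H41 H42 H43 P1 Hr ET.
  assert (EX1 : crossX p1 p2 p3 p4 = XX1 (herm p2 p3) (herm p3 p1) (herm p4 p1) (herm p4 p2)).
  { unfold crossX, XX1. rewrite (herm_sym p2 p3). reflexivity. }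
  assert (EX2 : crossX p1 p3 p2 p4 = XX2 (herm p1 p2) (herm p2 p3) (herm p4 p1) (herm p4 p3)).
  { unfold crossX, XX2. rewrite (herm_sym p1 p2). reflexivity. }
  assert (E4 : TT4 (herm p2 p3) (herm p4 p2) (herm p4 p3) = Tr p4 p2 p3).
  { unfold TT4, Tr. rewrite (herm_sym p4 p3). ring. }
  assert (P4 : 0 < Re (TT4 (herm p2 p3) (herm p4 p2) (herm p4 p3))).
  { rewrite E4, ET, Re_RtoC_mul. apply Rmult_lt_0_compat; auto. }
  rewrite EX1, EX2, L_arg by auto. rewrite E4, ET, Carg_scale by auto.
  unfold cartanA. change (Copp (Cmul (Cmul (herm p1 p2) (herm p2 p3)) (herm p3 p1))) with (Tr p1 p2 p3).
  change (TT1 (herm p1 p2) (herm p2 p3) (herm p3 p1)) with (Tr p1 p2 p3). ring.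
Qed.

Lemma not_same p q : isNull p -> herm p q <> Defs.C0 -> ~ samePt p q.
Proof. intros Hp H S. apply H, samePt_herm; auto. Qed.

Lemma part4 w1 w2 a : inV4 w1 w2 a -> exists P, inC4'' P /\ B0 P = (w1, w2, a).
Proof.
  intros (Hb & Hid & HZ & Hpos & Harg).
  set (t := tan a).
  set (T := Cmk (1/2) (t/2)).
  assert (ET : Cadd T (Cconj T) = Defs.C1) by (unfold T; apply Cx_ext; simpl; field).
  assert (ReT : 0 < Re T) by (unfold T; simpl; lra).
  assert (CargT : Carg T = a).
  { rewrite Carg_pos by auto. unfold T; simpl. replace (t / 2 / (1 / 2)) with t by field.
    unfold t. apply atan_tan. lra. }
  assert (Tnz : T <> Defs.C0) by (apply ReT_neq0; auto).
  assert (W1 : w1 <> Defs.C0).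
  { intro E; subst w1. replace (Cmul (Cmul Defs.C0 (Cconj w2)) (Cexpi (- a))) with Defs.C0 in Hpos by ring.
    simpl in Hpos; lra. }
  assert (W2 : w2 <> Defs.C0).
  { intro E; subst w2. replace (Cmul (Cmul w1 (Cconj Defs.C0)) (Cexpi (- a))) with Defs.C0 in Hpos
      by (autorewrite with cj; ring). simpl in Hpos; lra. }
  set (q4 := Cdiv (Cmul w2 (Copp T)) w1).
  set (y4 := Csub (Csub (Cdiv (Copp T) w1) q4) (Copp T)).
  set (p1 := mkV (Copp (Cconj T)) Defs.C1 Defs.C1).
  set (p2 := mkV Defs.C1 Defs.C0 Defs.C0).
  set (p3 := mkV Defs.C0 Defs.C0 Defs.C1).
  set (p4 := mkV q4 y4 Defs.C1).
  assert (Q4 : q4 <> Defs.C0) by (unfold q4; nzz).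
  assert (Y4 : y4 = Cdiv (Cmul T (Csub (Cadd w1 w2) Defs.C1)) w1) by (unfold y4, q4; field; auto).
  assert (Y4nz : y4 <> Defs.C0) by (rewrite Y4; nzz).
  Ltac hc := unfold herm; simpl; autorewrite with cj; try (field; nz); try ring.
  assert (h12 : herm p1 p2 = Defs.C1) by (unfold p1, p2; hc).
  assert (h23 : herm p2 p3 = Defs.C1) by (unfold p2, p3; hc).
  assert (h31 : herm p3 p1 = Copp T) by (unfold p3, p1; hc).
  assert (h41 : herm p4 p1 = Cdiv (Copp T) w1) by (unfold p4, p1, y4; hc).
  assert (h42 : herm p4 p2 = Defs.C1) by (unfold p4, p2; hc).
  assert (h43 : herm p4 p3 = q4) by (unfold p4, p3; hc).
  assert (N1 : isNull p1).
  { split. unfold p1; intro E; injection E; intros; lra.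
    transitivity (Csub Defs.C1 (Cadd T (Cconj T))). unfold p1; hc. rewrite ET; ring. }
  assert (N2 : isNull p2).
  { split. unfold p2; intro E; injection E; intros; lra. unfold p2; hc. }
  assert (N3 : isNull p3).
  { split. unfold p3; intro E; injection E; intros; lra. unfold p3; hc. }
  assert (N4 : isNull p4).
  { split. unfold p4; intro E; injection E; intros; lra.
    rewrite <- CargT in Hid. rewrite Cexpi_m2Arg in Hid by auto.
    set (Z := Csub (Cadd w1 w2) Defs.C1) in *.
    set (W := Cmul (Cmul w1 (Cconj w2)) (Cadd Defs.C1 (Cdiv (Cconj T) T))) in *.
    assert (HZW : Cmul Z (Cconj Z) = Cadd W (Cconj W)) by (rewrite mul_conj, add_conj, Hid; reflexivity).
    transitivity (Cadd (Cmul (Cdiv (Cmul T (Cconj T)) (Cmul w1 (Cconj w1))) (Csub (Cmul Z (Cconj Z)) (Cadd W (Cconj W))))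
                       (Cmul (Csub (Cadd T (Cconj T)) Defs.C1)
                             (Cadd (Cdiv (Cmul w2 T) w1) (Cdiv (Cmul (Cconj w2) (Cconj T)) (Cconj w1))))).
    - unfold p4, herm; simpl. rewrite Y4. unfold q4, W, Z. autorewrite with cj. field. nz.
    - rewrite HZW, ET. ring. }
  assert (D1 : det3 p1 p2 p3 = Copp Defs.C1) by (unfold det3, p1, p2, p3; ring).
  assert (D2 : det3 p2 p3 p4 = Copp y4) by (unfold det3, p2, p3, p4; ring).
  assert (EX1 : crossX p1 p2 p3 p4 = w1).
  { unfold crossX. rewrite h42, h31, h41, (herm_sym p2 p3), h23. autorewrite with cj. field. nz. }
  assert (EX2 : crossX p1 p3 p2 p4 = w2).
  { unfold crossX. rewrite h43, h41, (herm_sym p1 p2), h12, h23. unfold q4. autorewrite with cj. field. nz. }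
  assert (EA : cartanA p1 p2 p3 = a).
  { unfold cartanA. rewrite h12, h23, h31. rewrite <- CargT. f_equal. ring. }
  exists (mkQ p1 p2 p3 p4). split.
  2:{ unfold B0; simpl. rewrite EX1, EX2, EA. reflexivity. }
  unfold inC4''; simpl.
  split; [auto|split; [auto|split; [auto|split; [auto|]]]].
  split; [apply not_same; auto; rewrite h12; nzz|].
  split; [apply not_same; auto; rewrite (herm_sym p3 p1), h31; nzz|].
  split; [apply not_same; auto; rewrite (herm_sym p4 p1), h41; nzz|].
  split; [apply not_same; auto; rewrite h23; nzz|].
  split; [apply not_same; auto; rewrite (herm_sym p4 p2), h42; nzz|].
  split; [apply not_same; auto; rewrite (herm_sym p4 p3), h43; nzz|].
  split; [intro C; apply circle_det0 in C; rewrite D1 in C; apply (Copp_neq0 _ C1_neq_C0); auto|].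
  split; [intro C; apply circle_det0 in C; rewrite D2 in C; apply (Copp_neq0 _ Y4nz); auto|].
  intros [G [HG [[l2 [L2 F2]] [[l3 [L3 F3]] [l1 [L1 F1]]]]]].
  destruct (orbit_T G p1 p2 p3 p4 p2 p3 l1 l2 l3) as [r [Hr ETr]]; auto.
  apply Harg. rewrite <- EX1, <- EX2, <- EA.
  apply (GenArg p1 p2 p3 p4 r); auto.
  - rewrite h12; exact C1_neq_C0.
  - rewrite h23; exact C1_neq_C0.
  - rewrite h31; nzz.
  - rewrite h41; nzz.
  - rewrite h42; exact C1_neq_C0.
  - rewrite h43; auto.
  - unfold Tr. rewrite h12, h23, h31. replace (Copp (Cmul (Cmul Defs.C1 Defs.C1) (Copp T))) with T by ring. auto.
Qed.


Theorem mainTheorem7 :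
  (* B0 takes values in V4 (contains the identity and the inequalities) *)
  (forall P : Quad, inC4'' P ->
     let '(x1, x2, a) := B0 P in inV4 x1 x2 a) /\
  (* well defined on F4'' = C4''/PU(2,1) (independent of lifts and representative) *)
  (forall P Q : Quad, inC4'' P -> inC4'' Q -> quadEquiv P Q -> B0 P = B0 Q) /\
  (* injective on F4'' *)
  (forall P Q : Quad, inC4'' P -> inC4'' Q -> B0 P = B0 Q -> quadEquiv P Q) /\
  (* surjective onto V4 *)
  (forall (w1 w2 : Cx) (a : R), inV4 w1 w2 a ->
     exists P : Quad, inC4'' P /\ B0 P = (w1, w2, a)).
Proof.
  split; [exact part1|split; [|split]].
  - intros P Q _ _ H. apply part2; exact H.
  - exact part3.
  - exact part4.
Qed.
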